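(* Let $\mathfrak{g}$ be a Leibniz algebra such that $\mathcal{M}^{\mathrm{Lie}}(\mathfrak{g})$ is finite-dimensional, and let $0\to\mathfrak{r}\to\mathfrak{f}\xrightarrow{\rho}\mathfrak{g}\to0$ be a free presentation of $\mathfrak{g}$. Then an extension $0\to\mathfrak{m}\to\mathfrak{p}\xrightarrow{\psi}\mathfrak{g}\to0$ is a $\mathrm{Lie}$-stem cover if and only if there exists a two-sided ideal $\mathfrak{s}$ of $\mathfrak{f}$ with $[\mathfrak{f},\mathfrak{r}]_{\mathrm{Lie}}\subseteq\mathfrak{s}\subseteq\mathfrak{r}$ such that (a) $\mathfrak{p}\cong\mathfrak{f}/\mathfrak{s}$ and $\mathfrak{m}\cong\mathfrak{r}/\mathfrak{s}$; (b) $\frac{\mathfrak{r}}{[\mathfrak{f},\mathfrak{r}]_{\mathrm{Lie}}}$ is the direct sum of $\mathcal{M}^{\mathrm{Lie}}(\mathfrak{g})=\frac{\mathfrak{r}\cap[\mathfrak{f},\mathfrak{f}]_{\mathrm{Lie}}}{[\mathfrak{f},\mathfrak{r}]_{\mathrm{Lie}}}$ and $\frac{\mathfrak{s}}{[\mathfrak{f},\mathfrak{r}]_{\mathrm{Lie}}}$.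
   Context: Fix a field $\mathbb{K}$ with $\frac12\in\mathbb{K}$. A Leibniz algebra is a $\mathbb{K}$-vector space with a bilinear bracket satisfying $[x,[y,z]]=[[x,y],z]-[[x,z],y]$. $\mathfrak{p}^{\mathrm{ann}}$ is the span of all $[x,x]$ and $\mathfrak{p}_{\mathrm{Lie}}=\mathfrak{p}/\mathfrak{p}^{\mathrm{ann}}$. For two-sided ideals $\mathfrak{m},\mathfrak{n}$, $[\mathfrak{m},\mathfrak{n}]_{\mathrm{Lie}}$ is the span of all $[m,n]+[n,m]$. $Z_{\mathrm{Lie}}(\mathfrak{p})=\{z:[x,z]+[z,x]=0\ \forall x\}$. An extension $0\to\mathfrak{m}\to\mathfrak{p}\to\mathfrak{g}\to0$ is $\mathrm{Lie}$-central if $\mathfrak{m}\subseteq Z_{\mathrm{Lie}}(\mathfrak{p})$; it is a $\mathrm{Lie}$-stem extension if moreover the induced map $\mathfrak{p}_{\mathrm{Lie}}\to\mathfrak{g}_{\mathrm{Lie}}$ is an isomorphism (equivalently $\mathfrak{m}\subseteq\mathfrak{p}^{\mathrm{ann}}$); it is a $\mathrm{Lie}$-stem cover if moreover the induced map $\mathcal{M}^{\mathrm{Lie}}(\mathfrak{p})\to\mathcal{M}^{\mathrm{Lie}}(\mathfrak{g})$ is zero. For a free presentation $0\to\mathfrak{r}\to\mathfrak{f}\to\mathfrak{g}\to0$ ($\mathfrak{f}$ free Leibniz), $\mathcal{M}^{\mathrm{Lie}}(\mathfrak{g})=\frac{\mathfrak{r}\cap[\mathfrak{f},\mathfrak{f}]_{\mathrm{Lie}}}{[\mathfrak{f},\mathfrak{r}]_{\mathrm{Lie}}}$,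 independent of the presentation up to isomorphism. *)

(* Defs.v *)
From HB Require Import structures.
From mathcomp Require Import all_boot all_order all_algebra.
Set Implicit Arguments. Unset Strict Implicit. Unset Printing Implicit Defensive.
Import GRing.Theory.
Local Open Scope ring_scope.

Record leibniz (K : fieldType) := Leibniz {
  lcar :> lmodType K;
  lbr : lcar -> lcar -> lcar;
  lbr_linl : forall (a : K) (x y z : lcar), lbr (a *: x + y) z = a *: lbr x z + lbr y z;
  lbr_linr : forall (a : K) (x y z : lcar), lbr z (a *: x + y) = a *: lbr z x + lbr z y;
  lbr_leibniz : forall x y z : lcar, lbr x (lbr y z) = lbr (lbr x y) z - lbr (lbr x z) y
}.
Arguments lbr {K} l _ _.

Section Defs.
Variable K : fieldType.

Definition subset_of (V : Type) (A B : V -> Prop) := forall x, A x -> B x.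

Definition subspace (V : lmodType K) (S : V -> Prop) :=
  S 0 /\ (forall (a : K) x y, S x -> S y -> S (a *: x + y)).

Definition span (V : lmodType K) (A : V -> Prop) : V -> Prop :=
  fun x => forall S, subspace S -> subset_of A S -> S x.

Definition ideal (L : leibniz K) (I : L -> Prop) :=
  subspace I /\ forall x y, (I x \/ I y) -> I (lbr L x y).

Definition ann (L : leibniz K) : L -> Prop :=
  span (fun z => exists x, z = lbr L x x).

Definition lie_comm (L : leibniz K) (M N : L -> Prop) : L -> Prop :=
  span (fun z => exists m n, M m /\ N n /\ z = lbr L m n + lbr L n m).

Definition lie_center (L : leibniz K) : L -> Prop :=
  fun z => forall x, lbr L x z + lbr L z x = 0.

Definition full (V : Type) : V -> Prop := fun _ => True.

Definition is_hom (L1 L2 : leibniz K) (phi : L1 -> L2) :=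
  (forall (a : K) x y, phi (a *: x + y) = a *: phi x + phi y) /\
  (forall x y, phi (lbr L1 x y) = lbr L2 (phi x) (phi y)).

Definition kernel (L1 L2 : leibniz K) (phi : L1 -> L2) : L1 -> Prop :=
  fun x => phi x = 0.

Definition is_free (F : leibniz K) :=
  exists (X : Type) (j : X -> F),
    forall (L : leibniz K) (h : X -> L),
      exists phi : F -> L, is_hom phi /\ (forall x, phi (j x) = h x) /\
        forall phi' : F -> L, is_hom phi' -> (forall x, phi' (j x) = h x) ->
          forall y, phi' y = phi y.

Definition free_presentation (F G : leibniz K) (rho : F -> G) :=
  is_free F /\ is_hom rho /\ (forall y, exists x, rho x = y).

Definition is_extension (M P G : leibniz K) (i : M -> P) (psi : P -> G) :=
  is_hom i /\ is_hom psi /\ (forall x y, i x = i y -> x = y) /\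
  (forall z, exists y, psi y = z) /\
  (forall y, psi y = 0 <-> exists x, y = i x).

Definition lie_central_ext (M P G : leibniz K) (i : M -> P) (psi : P -> G) :=
  is_extension i psi /\ forall x, lie_center (i x).

(* Lie-stem extension, in the equivalent form m \subseteq p^ann. *)
Definition lie_stem_ext (M P G : leibniz K) (i : M -> P) (psi : P -> G) :=
  lie_central_ext i psi /\ forall x, ann (i x).

(* M^Lie(G) = (R \cap [F,F]_Lie) / [F,R]_Lie for a presentation rho : F -> G
   with R = ker rho: numerator and denominator as subsets of F. *)
Definition schur_num (F G : leibniz K) (rho : F -> G) : F -> Prop :=
  fun x => kernel rho x /\ lie_comm (@full F) (@full F) x.
Definition schur_den (F G : leibniz K) (rho : F -> G) : F -> Prop :=
  lie_comm (@full F) (kernel rho).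

(* The map M^Lie(P) -> M^Lie(G) induced by psi is zero: for any free
   presentations rho' : F' -> P, rho : F -> G and any lift beta : F' -> F
   of psi (rho o beta = psi o rho'), beta maps R' \cap [F',F']_Lie into
   [F,R]_Lie. *)
Definition induced_schur_zero (P G : leibniz K) (psi : P -> G) :=
  forall (F' F : leibniz K) (rho' : F' -> P) (rho : F -> G) (beta : F' -> F),
    free_presentation rho' -> free_presentation rho -> is_hom beta ->
    (forall x, rho (beta x) = psi (rho' x)) ->
    forall x, schur_num rho' x -> schur_den rho (beta x).

Definition lie_stem_cover (M P G : leibniz K) (i : M -> P) (psi : P -> G) :=
  lie_stem_ext i psi /\ induced_schur_zero psi.

Definition fin_dim_quot (V : lmodType K) (A B : V -> Prop) :=
  exists vs : seq V, (forall k, (k < size vs)%N -> A (nth 0 vs k)) /\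
    forall x, A x -> exists (c : nat -> K) y, B y /\
      x = \sum_(k < size vs) c k *: nth 0 vs k + y.
End Defs.

(* Main.v *)
Require Import Defs.
From mathcomp Require Import all_boot all_order all_algebra.
From Stdlib Require Import ClassicalEpsilon.
Import GRing.Theory.
Local Open Scope ring_scope.
Set Implicit Arguments. Unset Strict Implicit.

Section Helpers.
Variable K : fieldType.

Definition lin (V W : lmodType K) (f : V -> W) :=
  forall a x y, f (a *: x + y) = a *: f x + f y.

Lemma lin0 (V W : lmodType K) (f : V -> W) : lin f -> f 0 = 0.
Proof.
move=> h; have := h 1 0 0; rewrite !scale1r addr0 => e.
have : f 0 + 0 = f 0 + f 0 by rewrite addr0 -e.
by move/addrI.
Qed.

Lemma linD (V W : lmodType K) (f : V -> W) : lin f -> forall x y, f (x + y) = f x + f y.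
Proof. by move=> h x y; have := h 1 x y; rewrite !scale1r. Qed.

Lemma linZ (V W : lmodType K) (f : V -> W) : lin f -> forall a x, f (a *: x) = a *: f x.
Proof. by move=> h a x; have := h a x 0; rewrite (lin0 h) !addr0. Qed.

Lemma linN (V W : lmodType K) (f : V -> W) : lin f -> forall x, f (- x) = - f x.
Proof. by move=> h x; rewrite -scaleN1r (linZ h) scaleN1r. Qed.

Lemma linB (V W : lmodType K) (f : V -> W) : lin f -> forall x y, f (x - y) = f x - f y.
Proof. by move=> h x y; rewrite (linD h) (linN h). Qed.

Lemma lin_comp (U V W : lmodType K) (f : U -> V) (g : V -> W) : lin f -> lin g -> lin (fun x => g (f x)).
Proof. by move=> hf hg a x y; rewrite hf hg. Qed.

Lemma lin_sub (V W : lmodType K) (f g : V -> W) : lin f -> lin g -> lin (fun x => f x - g x).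
Proof. by move=> hf hg a x y; rewrite hf hg scalerBr opprD addrACA. Qed.

Lemma subD (V : lmodType K) (S : V -> Prop) : subspace S -> forall x y, S x -> S y -> S (x + y).
Proof. by move=> [_ h] x y hx hy; have := h 1 x y hx hy; rewrite scale1r. Qed.

Lemma subZ (V : lmodType K) (S : V -> Prop) : subspace S -> forall a x, S x -> S (a *: x).
Proof. by move=> [h0 h] a x hx; have := h a x 0 hx h0; rewrite addr0. Qed.

Lemma subB (V : lmodType K) (S : V -> Prop) : subspace S -> forall x y, S x -> S y -> S (x - y).
Proof.
by move=> hS x y hx hy; apply: subD => //; rewrite -scaleN1r; apply: subZ.
Qed.

Lemma span_sub (V : lmodType K) (A S : V -> Prop) (x : V) : subspace S -> subset_of A S -> Defs.span A x -> S x.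
Proof. by move=> hS hA hx; apply: hx. Qed.

Lemma span_in (V : lmodType K) (A : V -> Prop) (x : V) : A x -> Defs.span A x.
Proof. by move=> hx S _ hA; apply: hA. Qed.

Lemma span_subspace (V : lmodType K) (A : V -> Prop) : subspace (Defs.span A).
Proof.
split; first by move=> S [h0 _] _.
move=> a x y hx hy S hS hA; apply: (proj2 hS); [exact: hx | exact: hy].
Qed.

Lemma span_map (V W : lmodType K) (f : V -> W) (A : V -> Prop) (T : W -> Prop) :
  lin f -> subspace T -> (forall a, A a -> T (f a)) -> forall x, Defs.span A x -> T (f x).
Proof.
move=> hf hT hA x hx; apply: (hx (fun x => T (f x))) => //.
split; first by rewrite lin0 //; exact: (proj1 hT).
by move=> a y z hy hz; rewrite hf; apply: (proj2 hT).
Qed.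

Section Leib.
Variable L : leibniz K.

Lemma lbrl_lin (z : L) : lin (fun x : L => lbr L x z).
Proof. by move=> a x y; apply: lbr_linl. Qed.
Lemma lbrr_lin (z : L) : lin (fun x : L => lbr L z x).
Proof. by move=> a x y; apply: lbr_linr. Qed.

Lemma lbr0l (z : L) : lbr L 0 z = 0. Proof. exact: (lin0 (lbrl_lin z)). Qed.
Lemma lbr0r (z : L) : lbr L z 0 = 0. Proof. exact: (lin0 (lbrr_lin z)). Qed.
Lemma lbrDl (x y z : L) : lbr L (x + y) z = lbr L x z + lbr L y z.
Proof. exact: (linD (lbrl_lin z)). Qed.
Lemma lbrDr (x y z : L) : lbr L z (x + y) = lbr L z x + lbr L z y.
Proof. exact: (linD (lbrr_lin z)). Qed.
Lemma lbrBl (x y z : L) : lbr L (x - y) z = lbr L x z - lbr L y z.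
Proof. exact: (linB (lbrl_lin z)). Qed.
Lemma lbrBr (x y z : L) : lbr L z (x - y) = lbr L z x - lbr L z y.
Proof. exact: (linB (lbrr_lin z)). Qed.

Lemma zm (V : zmodType) (A B C D E F : V) :
  A + B - (C + D) = (B - F + (A - E)) + (E - C + (F - D)).
Proof.
have sub2 : forall x y z : V, x - y + (y - z) = x - z by move=> x y z; rewrite addrA subrK.
rewrite [in RHS](addrC (B - F)) addrACA !sub2.
by rewrite opprD addrACA.
Qed.

Lemma symdiff (b1 b2 c1 c2 : L) :
  (lbr L b1 b2 + lbr L b2 b1) - (lbr L c1 c2 + lbr L c2 c1) =
  (lbr L b2 (b1 - c1) + lbr L (b1 - c1) b2) + (lbr L c1 (b2 - c2) + lbr L (b2 - c2) c1).
Proof. by rewrite !lbrBl !lbrBr (zm _ _ _ _ (lbr L c1 b2) (lbr L b2 c1)). Qed.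

Lemma sym_ann (x y : L) : ann (lbr L x y + lbr L y x).
Proof.
have e : lbr L (x + y) (x + y) = lbr L x x + (lbr L x y + lbr L y x) + lbr L y y.
  by rewrite lbrDl !lbrDr !addrA.
have -> : lbr L x y + lbr L y x = lbr L (x + y) (x + y) - lbr L x x - lbr L y y.
  by rewrite e addrAC addrK addrC addKr.
have hS : subspace (@ann K L) by exact: span_subspace.
apply: (subB hS); first apply: (subB hS).
- by apply: span_in; exists (x + y).
- by apply: span_in; exists x.
by apply: span_in; exists y.
Qed.

End Leib.

Lemma hom_comp (A B C : leibniz K) (f : A -> B) (g : B -> C) :
  is_hom f -> is_hom g -> is_hom (fun x => g (f x)).
Proof.
move=> [hf1 hf2] [hg1 hg2]; split; first by move=> a x y; rewrite hf1 hg1.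
by move=> x y; rewrite hf2 hg2.
Qed.

Lemma lift (F G P : leibniz K) (f : F -> G) (psi : P -> G) :
  is_free F -> is_hom f -> is_hom psi -> (forall z, exists y, psi y = z) ->
  exists theta : F -> P, is_hom theta /\ forall x, psi (theta x) = f x.
Proof.
move=> [X [j U]] hf hpsi sur.
pose h := fun x : X => proj1_sig (constructive_indefinite_description _ (sur (f (j x)))).
have hh : forall x, psi (h x) = f (j x) :=
  fun x => proj2_sig (constructive_indefinite_description _ (sur (f (j x)))).
have [theta [ht [htj _]]] := U P h.
have [phi [_ [_ uniq]]] := U G (fun x => f (j x)).
exists theta; split => // x.
have e1 := uniq _ (hom_comp ht hpsi) (fun y => etrans (f_equal psi (htj y)) (hh y)).
have e2 := uniq f hf (fun y => erefl).
by rewrite e1 e2.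
Qed.

End Helpers.

Theorem mainTheorem12 (K : fieldType) (two_unit : (2%:R : K) != 0)
  (G F : leibniz K) (rho : F -> G)
  (pres : free_presentation rho)
  (fdM : fin_dim_quot (schur_num rho) (schur_den rho))
  (M P : leibniz K) (i : M -> P) (psi : P -> G)
  (ext : is_extension i psi) :
  lie_stem_cover i psi <->
  exists S : F -> Prop,
    ideal S /\
    subset_of (schur_den rho) S /\ subset_of S (kernel rho) /\
    (* (a) P ~ F/S and M ~ R/S, compatibly with the extensions *)
    (exists theta : F -> P,
       is_hom theta /\ (forall y, exists x, theta x = y) /\
       (forall x, theta x = 0 <-> S x) /\
       (forall x, psi (theta x) = rho x) /\
       (forall m, exists x, kernel rho x /\ theta x = i m)) /\
    (* (b) R/[F,R]_Lie = M^Lie(G) (+) S/[F,R]_Lie *)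
    (forall x, kernel rho x ->
       exists a b, schur_num rho a /\ S b /\ x = a + b) /\
    (forall x, schur_num rho x -> S x -> schur_den rho x).
Proof.
have [freeF [hrho surrho]] := pres.
have [hi [hpsi [iinj [surpsi kerpsi]]]] := ext.
have lpsi : lin psi := proj1 hpsi.
have lrho : lin rho := proj1 hrho.
have two : forall (V : lmodType K) (v : V), (2%:R^-1 : K) *: (v + v) = v.
  by move=> V v; rewrite -mulr2n -scaler_nat scalerA mulVf // scale1r.
have sq : forall (L : leibniz K) (x : L), lie_comm (@full L) (@full L) (lbr L x x).
  move=> L x; rewrite -[lbr L x x]two; apply: (subZ (span_subspace _)).
  by apply: span_in; exists x, x.
split.
- move=> [[[_ central] annM] sz].
  have [theta [ht hpt]] := lift freeF hrho hpsi surpsi.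
  have ltheta : lin theta := proj1 ht.
  have dec : forall q, exists x m, q = theta x + i m.
    move=> q; have [x ex] := surrho (psi q).
    have : psi (q - theta x) = 0 by rewrite (linB lpsi) hpt ex subrr.
    move/kerpsi => [m em]; exists x, m; by rewrite -em addrC subrK.
  have key : forall p, ann p -> exists f, lie_comm (@full F) (@full F) f /\ theta f = p.
    move=> p hp.
    have subT : subspace (fun p => exists f, lie_comm (@full F) (@full F) f /\ theta f = p).
      split; first by exists 0; split; [exact: (proj1 (span_subspace _)) | exact: lin0].
      move=> a x y [f1 [h1 e1]] [f2 [h2 e2]]; exists (a *: f1 + f2); split.
        exact: (proj2 (span_subspace _)).
      by rewrite ltheta e1 e2.
    apply: (span_sub subT _ hp).
    move=> z [q ->]; have [x [m ->]] := dec q.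
    have c1 := central m (theta x).
    have c2 : lbr P (i m) (i m) = 0 by rewrite -[LHS]two (central m (i m)) scaler0.
    exists (lbr F x x); split; first exact: sq.
    by rewrite (proj2 ht) lbrDl !lbrDr c2 addr0 -addrA c1 addr0.
  have surth : forall p, exists x, theta x = p.
    move=> p; have [x [m ->]] := dec p; have [f [_ ef]] := key _ (annM m).
    by exists (x + f); rewrite (linD ltheta) ef.
  exists (fun x => theta x = 0).
  have subS : subspace (fun x => theta x = 0).
    split; first exact: lin0.
    by move=> a x y hx hy; rewrite ltheta hx hy scaler0 addr0.
  split.
    split => // x y [hx|hy]; rewrite (proj2 ht) ?hx ?hy ?lbr0l ?lbr0r //.
  split.
    move=> x hx; apply: (span_sub subS _ hx) => z [m [n [_ [hn ->]]]].
    have : psi (theta n) = 0 by rewrite hpt.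
    move/kerpsi => [m' em'].
    by rewrite (linD ltheta) !(proj2 ht) em' central.
  split.
    by move=> x hx; rewrite /kernel -hpt hx (lin0 lpsi).
  split.
    exists theta; split => //; split => //; split => //; split => //.
    move=> m; have [x ex] := surth (i m); exists x; split => //.
    rewrite /kernel -hpt ex; apply/kerpsi; by exists m.
  split.
    move=> x hx.
    have : psi (theta x) = 0 by rewrite hpt.
    move/kerpsi => [m em]; have [f [hf ef]] := key _ (annM m).
    exists f, (x - f); split; last split.
    + split => //; rewrite /kernel -hpt ef -em hpt; exact: hx.
    + by rewrite (linB ltheta) em ef subrr.
    + by rewrite addrC subrK.
  move=> x [hxR hxc] hS.
  have hid : is_hom (fun y : F => y) by split.
  exact: (sz F F theta rho (fun y => y) (conj freeF (conj ht surth)) pres hid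
            (fun y => esym (hpt y)) x (conj hS hxc)).
- move=> [S [[subS idS] [denS [SR [[theta [ht [surth [kerth [hpt mlift]]]]] [b1 b2]]]]]].
  have ltheta : lin theta := proj1 ht.
  have thR : forall x, kernel rho x -> forall y, lbr P y (theta x) + lbr P (theta x) y = 0.
    move=> x hx y; have [f <-] := surth y.
    rewrite -!(proj2 ht) -(linD ltheta); apply/kerth; apply: denS; apply: span_in.
    by exists f, x.
  split; first split; first split; first exact: ext.
  + move=> m y; have [x [hx ex]] := mlift m; rewrite -ex; exact: thR.
  + move=> m; have [x [hx ex]] := mlift m; have [a [b [[ha hac] [hb ex2]]]] := b1 x hx.
    rewrite -ex ex2 (linD ltheta) (proj2 (kerth b) hb) addr0.
    apply: (span_map (T := @ann K P) ltheta (span_subspace _) _ hac) => z [u [v [_ [_ ->]]]].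
    rewrite (linD ltheta) !(proj2 ht); exact: sym_ann.
  + move=> F' F'' rho' rho'' beta [fr' [hr' sr']] [fr'' [hr'' sr'']] hb comm x [hx' hxc].
    have [gam [hg hgt]] := lift fr' hr' ht surth.
    have [del [hd hdt]] := lift freeF hrho hr'' sr''.
    have lg : lin gam := proj1 hg.
    have ld : lin del := proj1 hd.
    have lb : lin beta := proj1 hb.
    have lr'' : lin rho'' := proj1 hr''.
    have subD'' : subspace (schur_den rho'') := span_subspace _.
    have c1 : schur_den rho (gam x).
      apply: b2.
        split.
          by rewrite /kernel -hpt hgt hx' (lin0 lpsi).
        apply: (span_map lg (span_subspace _) _ hxc) => z [u [v [_ [_ ->]]]].
        rewrite (linD lg) !(proj2 hg); apply: span_in; by exists (gam u), (gam v).
      by apply/kerth; rewrite hgt.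
    have c2 : forall y, schur_den rho y -> schur_den rho'' (del y).
      move=> y hy; apply: (span_map ld subD'' _ hy) => z [m [n [_ [hn ->]]]].
      rewrite (linD ld) !(proj2 hd); apply: span_in; exists (del m), (del n).
      split => //; split => //; by rewrite /kernel hdt.
    have c3 : schur_den rho'' (beta x - del (gam x)).
      apply: (span_map (f := fun y => beta y - del (gam y)) (lin_sub lb (lin_comp lg ld)) subD'' _ hxc).
      move=> z [u [v [_ [_ ->]]]] /=.
      have hr : forall w, rho'' (beta w - del (gam w)) = 0.
        by move=> w; rewrite (linB lr'') comm hdt -hpt hgt subrr.
      rewrite (linD lb) (linD lg) (linD ld) !(proj2 hb) !(proj2 hg) !(proj2 hd) symdiff.
      apply: (subD subD'').
        apply: span_in; exists (beta v), (beta u - del (gam u)); split => //; split => //.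
      apply: span_in; exists (del (gam u)), (beta v - del (gam v)); split => //; split => //.
    have -> : beta x = (beta x - del (gam x)) + del (gam x) by rewrite subrK.
    exact: (subD subD'' c3 (c2 _ c1)).
Qed.
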